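(* Let $B$ be a finite Blaschke product of degree $n=p_1p_2\cdots p_m$ (with integers $p_i\ge 2$) having exactly one critical value. Then for every permutation $\sigma$ of $\{1,\dots,m\}$ there exist finite Blaschke products $B_1,\dots,B_m$ with $\deg B_j=p_{\sigma(j)}$ such that $B=B_1\circ B_2\circ\cdots\circ B_m$.
   Context: A finite Blaschke product of degree $d$ is $B(z)=\gamma\prod_{j=1}^d \frac{z-a_j}{1-\overline{a_j}z}$ with $a_j\in\mathbb{D}$ and $|\gamma|=1$. The set of critical values of $B$ is $\{w\in\mathbb{D}: w=B(z)\text{ for some } z\in\mathbb{D} \text{ with } B'(z)=0\}$. *)

(* Defs.v *)
From Stdlib Require Export Reals List.
From Coquelicot Require Export Coquelicot.

Open Scope R_scope.

Definition in_disk (z : C) : Prop := Cmod z < 1.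

Definition blaschke_factor (a z : C) : C := ((z - a) / (1 - Cconj a * z))%C.

Definition blaschke_formula (gamma : C) (a : list C) (z : C) : C :=
  (gamma * fold_right (fun aj acc => blaschke_factor aj z * acc) (RtoC 1) a)%C.

(* B is a finite Blaschke product of degree d: on the unit disk it is given by
   the formula with d zeros a_1..a_d (with multiplicity) in the disk and a
   unimodular constant gamma. (B is considered as a function on the disk;
   its values outside the disk are irrelevant.) *)
Definition is_FBP (d : nat) (B : C -> C) : Prop :=
  exists (gamma : C) (a : list C),
    Cmod gamma = 1 /\ length a = d /\ List.Forall in_disk a /\
    forall z, in_disk z -> B z = blaschke_formula gamma a z.

Definition is_critical_point (B : C -> C) (z : C) : Prop :=
  @is_derive C_AbsRing C_NormedModule B z (RtoC 0).

Definition critical_value (B : C -> C) (w : C) : Prop :=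
  in_disk w /\ exists z, in_disk z /\ is_critical_point B z /\ w = B z.

Definition compose_list (Bs : nat -> C -> C) (m : nat) : C -> C :=
  fold_right (fun j acc => fun z => Bs j (acc z)) (fun z => z) (seq 0 m).

Definition prod_upto (p : nat -> nat) (m : nat) : nat :=
  fold_right (fun j acc => (p j * acc)%nat) 1%nat (seq 0 m).

Definition is_perm (m : nat) (sigma : nat -> nat) : Prop :=
  (forall i, (i < m)%nat -> (sigma i < m)%nat) /\
  (forall i j, (i < m)%nat -> (j < m)%nat -> sigma i = sigma j -> i = j).

(* Main.v *)
Require Import Defs.
From Stdlib Require Import Lia Lra Psatz Permutation Classical.

Lemma Cmod_sq z : Cmod z ^ 2 = fst z ^ 2 + snd z ^ 2.
Proof.
  unfold Cmod. rewrite pow2_sqrt; [reflexivity|]. nra.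
Qed.

Lemma Cmod_triangle_rev y z : Cmod z - Cmod (y - z) <= Cmod y.
Proof.
  assert (H := Cmod_triangle y (Copp (y - z))).
  replace (y + - (y - z))%C with z in H by ring.
  rewrite Cmod_opp in H. lra.
Qed.

Lemma is_derive_Cinv (z : C) : z <> 0%C ->
  @is_derive C_AbsRing C_NormedModule (fun t => Cinv t) z (Copp (Cinv (z * z))).
Proof.
  intros Hz. split; [apply is_linear_scal_l|].
  intros x Hx. apply (@is_filter_lim_locally_unique C_AbsRing (AbsRing_NormedModule C_AbsRing)) in Hx. subst x.
  intros eps.
  assert (Hm : 0 < Cmod z) by (apply Cmod_gt_0; auto).
  assert (Hd : 0 < Rmin (Cmod z / 2) (eps * Cmod z ^ 3 / 2) / 2).
  { apply Rmult_lt_0_compat; [|lra]. apply Rmin_glb_lt; [lra|].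
    apply Rmult_lt_0_compat; [|lra]. apply Rmult_lt_0_compat; [apply cond_pos|].
    apply pow_lt; auto. }
  exists (mkposreal _ Hd). intros y Hy.
  change (Cmod (minus y z) < Rmin (Cmod z / 2) (eps * Cmod z ^ 3 / 2) / 2) in Hy.
  set (d := Cmod (minus y z)) in *.
  assert (Hd0 : 0 <= d) by apply Cmod_ge_0.
  assert (Hdm : d < Rmin (Cmod z / 2) (eps * Cmod z ^ 3 / 2)).
  { assert (0 < Rmin (Cmod z / 2) (eps * Cmod z ^ 3 / 2)) by lra. nra. }
  assert (H1 : d < Cmod z / 2) by (eapply Rlt_le_trans; [apply Hdm|apply Rmin_l]).
  assert (H2 : d < eps * Cmod z ^ 3 / 2) by (eapply Rlt_le_trans; [apply Hdm|apply Rmin_r]).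
  assert (Hy0 : Cmod z / 2 < Cmod y).
  { pose proof (Cmod_triangle_rev y z). unfold d, minus in *. simpl in *. 
    change (plus y (opp z)) with (y - z)%C in H1. lra. }
  assert (Hyn : (y : C) <> RtoC 0).
  { intro E; subst y. rewrite Cmod_0 in Hy0. lra. }
  change (Cmod (Cminus (Cminus (Cinv (y:C)) (Cinv z)) (Cmult (Cminus (y:C) z) (Copp (Cinv (Cmult z z))))) <= eps * d).
  replace (Cminus (Cminus (Cinv (y:C)) (Cinv z)) (Cmult (Cminus (y:C) z) (Copp (Cinv (Cmult z z))))) with
    (((y:C) - z) * ((y:C) - z) / (z * z * (y:C)))%C by (field; auto).
  unfold Cdiv. rewrite !Cmod_mult, Cmod_inv, !Cmod_mult.
  2: { repeat apply Cmult_neq_0; auto. }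
  change (Cmod (y - z)) with d.
  assert (Hpos : 0 < Cmod z * Cmod z * Cmod y) by (repeat apply Rmult_lt_0_compat; lra).
  apply Rle_trans with (d * d * / (Cmod z * Cmod z * (Cmod z / 2))).
  { apply Rmult_le_compat_l; [nra|]. apply Rinv_le_contravar; [nra|].
    apply Rmult_le_compat_l; nra. }
  apply Rle_trans with (d * (eps * Cmod z ^ 3 / 2) * / (Cmod z * Cmod z * (Cmod z / 2))).
  { apply Rmult_le_compat_r; [left; apply Rinv_0_lt_compat; nra|]. nra. }
  right. field. lra.
Qed.

Lemma Cmult_integral (x y : C) : (x * y)%C = RtoC 0 -> x = RtoC 0 \/ y = RtoC 0.
Proof.
  intros H. apply (f_equal Cmod) in H. rewrite Cmod_mult, Cmod_0 in H.
  destruct (Rmult_integral _ _ H) as [H1|H1]; [left|right]; apply Cmod_eq_0; auto.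
Qed.

Lemma Cconj_RtoC (r : R) : Cconj (RtoC r) = RtoC r.
Proof. unfold Cconj, RtoC. simpl. rewrite Ropp_0. reflexivity. Qed.

Notation CD f z l := (@is_derive C_AbsRing C_NormedModule f z l).

Lemma CD_of_K (f : C -> C) (z : C) (l : C) : @is_derive C_AbsRing (AbsRing_NormedModule C_AbsRing) f z l -> CD f z l.
Proof. intros H. split. apply is_linear_scal_l. destruct H as [_ H]. exact H. Qed.
Lemma CD_to_K (f : C -> C) (z : C) (l : C) : CD f z l -> @is_derive C_AbsRing (AbsRing_NormedModule C_AbsRing) f z l.
Proof. intros H. split. apply is_linear_scal_l. destruct H as [_ H]. exact H. Qed.

Lemma CD_eq (f : C -> C) (z : C) (l : C) (l' : C) : CD f z l -> l = l' -> CD f z l'.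
Proof. intros H ->; exact H. Qed.

Lemma CD_ext (f : C -> C) (g : C -> C) (z : C) (l : C) : (forall t, f t = g t) -> CD f z l -> CD g z l.
Proof. intros H D. eapply (@is_derive_ext C_AbsRing C_NormedModule); eauto. Qed.

Lemma CD_const (c z : C) : CD (fun _ => c) z (RtoC 0).
Proof. apply (@is_derive_const C_AbsRing C_NormedModule). Qed.

Lemma CD_id (z : C) : CD (fun t => t) z (RtoC 1).
Proof. pose proof (@is_derive_id C_AbsRing z) as H. unfold is_derive in *.
 split. apply is_linear_scal_l. destruct H as [_ H]. exact H. Qed.

Lemma CD_plus (f : C -> C) (g : C -> C) (z : C) (df : C) (dg : C) : CD f z df -> CD g z dg ->
  CD (fun t => f t + g t)%C z (df + dg)%C.
Proof. intros. apply (@is_derive_plus C_AbsRing C_NormedModule); auto. Qed.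

Lemma CD_opp (f : C -> C) (z : C) (df : C) : CD f z df -> CD (fun t => - f t)%C z (- df)%C.
Proof. intros. apply (@is_derive_opp C_AbsRing C_NormedModule); auto. Qed.

Lemma CD_minus (f : C -> C) (g : C -> C) (z : C) (df : C) (dg : C) : CD f z df -> CD g z dg ->
  CD (fun t => f t - g t)%C z (df - dg)%C.
Proof. intros. apply CD_plus; auto. apply CD_opp; auto. Qed.

Lemma CD_mult (f : C -> C) (g : C -> C) (z : C) (df : C) (dg : C) : CD f z df -> CD g z dg ->
  CD (fun t => f t * g t)%C z (df * g z + f z * dg)%C.
Proof.
  intros. apply CD_of_K. apply (@is_derive_mult C_AbsRing); try apply CD_to_K; auto.
  intros; apply Cmult_comm.
Qed.

Lemma CD_comp (f : C -> C) (g : C -> C) (z : C) (df : C) (dg : C) : CD f (g z) df -> CD g z dg ->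
  CD (fun t => f (g t)) z (dg * df)%C.
Proof. intros. apply (@is_derive_comp C_AbsRing C_NormedModule); auto. apply CD_to_K; auto. Qed.

Lemma CD_inv (g : C -> C) (z : C) (dg : C) : CD g z dg -> g z <> RtoC 0 ->
  CD (fun t => / g t)%C z (- dg / (g z * g z))%C.
Proof.
  intros D H. eapply CD_eq.
  - apply (CD_comp (fun t => / t)%C g); [apply is_derive_Cinv; auto|exact D].
  - unfold Cdiv. ring.
Qed.

Lemma CD_div (f : C -> C) (g : C -> C) (z : C) (df : C) (dg : C) : CD f z df -> CD g z dg -> g z <> RtoC 0 ->
  CD (fun t => f t / g t)%C z ((df * g z - f z * dg) / (g z * g z))%C.
Proof.
  intros Df Dg H. eapply CD_eq.
  - apply CD_mult; [exact Df| apply CD_inv; eauto].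
  - cbv beta. field. auto.
Qed.

Lemma CD_factor (a : C) (z : C) : (1 - Cconj a * z)%C <> RtoC 0 ->
  CD (blaschke_factor a) z ((1 - Cconj a * a) / ((1 - Cconj a * z) * (1 - Cconj a * z)))%C.
Proof.
  intros H. unfold blaschke_factor. eapply CD_eq.
  - apply (CD_div (fun t => t - a)%C (fun t => 1 - Cconj a * t)%C).
    + apply CD_minus; [apply CD_id|apply CD_const].
    + apply CD_minus; [apply CD_const|].
      eapply CD_eq; [apply CD_mult; [apply CD_const|apply CD_id]|]. reflexivity.
    + exact H.
  - field. auto.
Qed.

Definition prodC (l : list C) : C := fold_right Cmult (RtoC 1) l.
Definition Pz (a : list C) (z : C) : C := prodC (map (fun x => z - x)%C a).
Definition Ps (a : list C) (z : C) : C := prodC (map (fun x => 1 - Cconj x * z)%C a).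
Definition bprod (a : list C) (z : C) : C :=
  fold_right (fun aj acc => (blaschke_factor aj z * acc)%C) (RtoC 1) a.

Lemma formula_bprod g a z : blaschke_formula g a z = (g * bprod a z)%C.
Proof. reflexivity. Qed.

Lemma in_disk_sq z : in_disk z <-> fst z ^ 2 + snd z ^ 2 < 1.
Proof.
  unfold in_disk. rewrite <- Cmod_sq. split; intro H.
  - pose proof (Cmod_ge_0 z). nra.
  - pose proof (Cmod_ge_0 z). nra.
Qed.

Lemma disk_ne a z : in_disk a -> in_disk z -> (1 - Cconj a * z)%C <> RtoC 0.
Proof.
  intros Ha Hz E.
  assert (E' : (Cconj a * z)%C = RtoC 1).
  { replace (Cconj a * z)%C with (1 - (1 - Cconj a * z))%C by ring. rewrite E. ring. }
  apply (f_equal Cmod) in E'. rewrite Cmod_mult, Cmod_conj, Cmod_1 in E'.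
  unfold in_disk in *. pose proof (Cmod_ge_0 a). pose proof (Cmod_ge_0 z). nra.
Qed.

Lemma Cmod_lt_sq u v : fst u ^ 2 + snd u ^ 2 < fst v ^ 2 + snd v ^ 2 -> Cmod u < Cmod v.
Proof.
  intros H. rewrite <- !Cmod_sq in H. pose proof (Cmod_ge_0 u). pose proof (Cmod_ge_0 v). nra.
Qed.

Lemma disk_factor_lt a z : in_disk a -> in_disk z -> Cmod (blaschke_factor a z) < 1.
Proof.
  intros Ha Hz. pose proof (disk_ne a z Ha Hz) as Hn.
  unfold blaschke_factor. rewrite Cmod_div by exact Hn.
  assert (Hp : 0 < Cmod (1 - Cconj a * z)) by (apply Cmod_gt_0; auto).
  apply (Rmult_lt_reg_r (Cmod (1 - Cconj a * z))); auto.
  unfold Rdiv. rewrite Rmult_assoc, Rinv_l, Rmult_1_r, Rmult_1_l by lra.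
  apply Cmod_lt_sq. apply in_disk_sq in Ha. apply in_disk_sq in Hz.
  destruct a as [a1 a2], z as [z1 z2]. simpl in *.
  assert (0 < (1 - (a1^2+a2^2)) * (1 - (z1^2+z2^2))) by (apply Rmult_lt_0_compat; lra).
  nra.
Qed.

Lemma bprod_le a z : List.Forall in_disk a -> in_disk z -> Cmod (bprod a z) <= 1.
Proof.
  intros Ha Hz. induction Ha; simpl.
  - rewrite Cmod_1. lra.
  - rewrite Cmod_mult. pose proof (disk_factor_lt x z H Hz).
    pose proof (Cmod_ge_0 (blaschke_factor x z)). pose proof (Cmod_ge_0 (bprod l z)). nra.
Qed.

Lemma bprod_lt a z : List.Forall in_disk a -> a <> nil -> in_disk z -> Cmod (bprod a z) < 1.
Proof.
  intros Ha Hne Hz. destruct Ha as [|x l Hx Hl]; [congruence|]. simpl.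
  rewrite Cmod_mult. pose proof (disk_factor_lt x z Hx Hz).
  pose proof (bprod_le l z Hl Hz).
  pose proof (Cmod_ge_0 (blaschke_factor x z)). pose proof (Cmod_ge_0 (bprod l z)). nra.
Qed.

Lemma formula_lt g a z : Cmod g = 1 -> List.Forall in_disk a -> a <> nil -> in_disk z ->
  in_disk (blaschke_formula g a z).
Proof.
  intros Hg Ha Hne Hz. unfold in_disk. rewrite formula_bprod, Cmod_mult, Hg, Rmult_1_l.
  apply bprod_lt; auto.
Qed.

Lemma prodC_zero l : prodC l = RtoC 0 -> In (RtoC 0) l.
Proof.
  induction l as [|x l IH]; simpl; intros H.
  - apply (f_equal fst) in H. simpl in H. lra.
  - destruct (Cmult_integral _ _ H) as [H1|H1]; [left; auto|right; auto].
Qed.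

Lemma prodC_ne0 l : (forall x, In x l -> x <> RtoC 0) -> prodC l <> RtoC 0.
Proof.
  intros H E. apply prodC_zero in E. apply (H _ E). reflexivity.
Qed.

Lemma Ps_ne0 a z : List.Forall in_disk a -> in_disk z -> Ps a z <> RtoC 0.
Proof.
  intros Ha Hz. apply prodC_ne0. intros x Hx. apply in_map_iff in Hx.
  destruct Hx as [y [<- Hy]]. apply disk_ne; auto.
  rewrite List.Forall_forall in Ha; auto.
Qed.

Lemma bprod_PP a z : (forall x, In x a -> (1 - Cconj x * z)%C <> RtoC 0) ->
  bprod a z = (Pz a z / Ps a z)%C.
Proof.
  induction a as [|x a IH]; intros H; simpl.
  - unfold Pz, Ps; simpl. field. 
  - unfold Pz, Ps in *; simpl. rewrite IH by (intros; apply H; simpl; auto).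
    unfold blaschke_factor. field. split.
    + apply prodC_ne0. intros y Hy. apply in_map_iff in Hy. destruct Hy as [u [<- Hu]].
      apply H; simpl; auto.
    + apply H; simpl; auto.
Qed.

Lemma bprod_zero a z : (forall x, In x a -> (1 - Cconj x * z)%C <> RtoC 0) ->
  bprod a z = RtoC 0 -> In z a.
Proof.
  induction a as [|x a IH]; intros H E; simpl in *.
  - apply (f_equal fst) in E. simpl in E. lra.
  - destruct (Cmult_integral _ _ E) as [E1|E1].
    + left. unfold blaschke_factor in E1.
      assert (Hn := H x (or_introl eq_refl)).
      assert (E2 : (z - x)%C = RtoC 0).
      { replace (z - x)%C with ((z - x) / (1 - Cconj x * z) * (1 - Cconj x * z))%C
          by (field; auto). rewrite E1. ring. }
      replace z with ((z - x) + x)%C by ring. rewrite E2. ring.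
    + right. apply IH; auto.
Qed.

Definition gL (x z : C) : C := ((1 - Cconj x * x) / ((z - x) * (1 - Cconj x * z)))%C.
Definition Lsum (a : list C) (z : C) : C := fold_right Cplus (RtoC 0) (map (fun x => gL x z) a).

Lemma CD_bprod a z : (forall x, In x a -> (z - x)%C <> RtoC 0 /\ (1 - Cconj x * z)%C <> RtoC 0) ->
  CD (bprod a) z (bprod a z * Lsum a z)%C.
Proof.
  induction a as [|x a IH]; intros H.
  - eapply CD_eq; [apply (CD_const (RtoC 1))|]. unfold Lsum. simpl. ring.
  - eapply CD_eq.
    + apply (CD_mult (blaschke_factor x) (bprod a)).
      * apply CD_factor. apply H; simpl; auto.
      * apply IH. intros; apply H; simpl; auto.
    + simpl. unfold Lsum, gL, blaschke_factor. simpl.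
      destruct (H x (or_introl eq_refl)) as [H1 H2].
      generalize (bprod a z) (fold_right Cplus (RtoC 0)
        (map (fun x0 : C => ((1 - Cconj x0 * x0) / ((z - x0) * (1 - Cconj x0 * z)))%C) a)).
      intros u v. field. auto.
Qed.

Lemma CD_formula g a z : (forall x, In x a -> (z - x)%C <> RtoC 0 /\ (1 - Cconj x * z)%C <> RtoC 0) ->
  CD (blaschke_formula g a) z (g * (bprod a z * Lsum a z))%C.
Proof.
  intros H. eapply CD_eq.
  - apply (CD_mult (fun _ => g) (bprod a)); [apply CD_const|apply CD_bprod; auto].
  - ring.
Qed.

Fixpoint peval (l : list C) (z : C) : C :=
  match l with nil => RtoC 0 | a :: l' => (a + z * peval l' z)%C end.

Fixpoint padd (l m : list C) : list C :=
  match l, m with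
  | a :: l', b :: m' => (a + b)%C :: padd l' m'
  | nil, _ => m
  | _, nil => l
  end.

Lemma peval_padd l m z : peval (padd l m) z = (peval l z + peval m z)%C.
Proof.
  revert m; induction l as [|a l IH]; intros [|b m]; simpl; try ring.
  rewrite IH. ring.
Qed.

Lemma padd_len l m : length l = length m -> length (padd l m) = length l.
Proof.
  revert m; induction l as [|a l IH]; intros [|b m]; simpl; intros H; try lia.
  rewrite IH; lia.
Qed.

Lemma padd_last l m : length l = length m -> l <> nil ->
  last (padd l m) (RtoC 0) = (last l (RtoC 0) + last m (RtoC 0))%C.
Proof.
  revert m; induction l as [|a l IH]; intros [|b m]; simpl; intros H Hn; try lia; try congruence.
  destruct l as [|a' l]; destruct m as [|b' m]; simpl in *; try lia.
  - reflexivity.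
  - specialize (IH (b' :: m)). simpl in IH. apply IH; [lia|congruence].
Qed.

Definition is_pd (n : nat) (c : C) (f : C -> C) : Prop :=
  exists l, length l = S n /\ last l (RtoC 0) = c /\ forall z, f z = peval l z.

Lemma pd_ext n c f g : (forall z, f z = g z) -> is_pd n c f -> is_pd n c g.
Proof.
  intros E [l [H1 [H2 H3]]]. exists l; repeat split; auto. intros; rewrite <- E; auto.
Qed.

Lemma pd_const c : is_pd 0 c (fun _ => c).
Proof. exists (c :: nil). repeat split. intros; simpl; ring. Qed.

Lemma pd_add n c1 c2 f g : is_pd n c1 f -> is_pd n c2 g ->
  is_pd n (c1 + c2)%C (fun z => f z + g z)%C.
Proof.
  intros [l [H1 [H2 H3]]] [m [K1 [K2 K3]]]. exists (padd l m). repeat split.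
  - rewrite padd_len; lia.
  - rewrite padd_last; [congruence|lia|]. intro; subst; simpl in H1; lia.
  - intros; rewrite peval_padd, H3, K3; auto.
Qed.

Lemma pd_scal k n c f : is_pd n c f -> is_pd n (k * c)%C (fun z => k * f z)%C.
Proof.
  intros [l [H1 [H2 H3]]]. exists (map (Cmult k) l). repeat split.
  - rewrite length_map; auto.
  - destruct l as [|a l]; [simpl in H1; lia|]. rewrite <- H2.
    clear. revert a. induction l as [|b l IH]; intros a; simpl; auto.
    apply (IH b).
  - intros z. rewrite H3. clear. induction l as [|a l IH]; simpl; [ring|]. rewrite <- IH. ring.
Qed.

Lemma pd_mulX n c f : is_pd n c f -> is_pd (S n) c (fun z => z * f z)%C.
Proof.
  intros [l [H1 [H2 H3]]]. exists (RtoC 0 :: l). repeat split.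
  - simpl; lia.
  - destruct l; [simpl in H1; lia|]. simpl. simpl in H2. exact H2.
  - intros; simpl; rewrite H3; ring.
Qed.

Lemma peval_app0 l z : peval (l ++ RtoC 0 :: nil) z = peval l z.
Proof. induction l as [|a l IH]; simpl; [ring|]. rewrite IH; ring. Qed.

Lemma pd_lift n c f : is_pd n c f -> is_pd (S n) (RtoC 0) f.
Proof.
  intros [l [H1 [H2 H3]]]. exists (l ++ RtoC 0 :: nil). repeat split.
  - rewrite length_app; simpl; lia.
  - apply last_last.
  - intros; rewrite peval_app0; auto.
Qed.



Lemma pd_mul_lin al be n c f : is_pd n c f ->
  is_pd (S n) (be * c)%C (fun z => (al + be * z) * f z)%C.
Proof.
  intros H.
  assert (H1 := pd_scal al _ _ _ (pd_lift _ _ _ H)).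
  assert (H2 := pd_scal be _ _ _ (pd_mulX _ _ _ H)).
  assert (H3 := pd_add _ _ _ _ _ H1 H2).
  replace (be * c)%C with (al * RtoC 0 + be * c)%C by ring.
  eapply pd_ext; [|exact H3]. intros z; simpl; ring.
Qed.

Definition is_pol (n : nat) (f : C -> C) : Prop := exists c, is_pd n c f.

Lemma strip l : exists l', (forall z, peval l z = peval l' z) /\
  (l' = nil \/ last l' (RtoC 0) <> RtoC 0).
Proof.
  induction l as [|a l [l' [E H]]].
  - exists nil; split; auto.
  - destruct H as [->|H].
    + destruct (Ceq_dec a (RtoC 0)) as [Ha|Ha].
      * exists nil. split; [|auto]. intros z; simpl; rewrite E, Ha; simpl; ring.
      * exists (a :: nil). split; [|right; auto]. intros z; simpl; rewrite E; simpl; ring.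
    + exists (a :: l'). split.
      * intros z; simpl; rewrite E; auto.
      * right. destruct l'; [simpl in H; congruence|]. simpl. exact H.
Qed.


Module MCT.
From HB Require Import structures.
From mathcomp Require Import all_boot all_order all_algebra.
From mathcomp Require Import Rstruct.
From mathcomp.real_closed Require Import complex.
Import GRing.Theory.
Local Open Scope ring_scope.

Definition K := complex R.
Definition to_mc (z : C) : K := Complex (fst z) (snd z).
Definition of_mc (x : K) : C := (complex.Re x, complex.Im x).

Lemma of_to z : of_mc (to_mc z) = z. Proof. by case: z. Qed.
Lemma to_of x : to_mc (of_mc x) = x. Proof. by case: x. Qed.

Lemma to_add x y : to_mc (Cplus x y) = to_mc x + to_mc y.
Proof. by case: x => a b; case: y => c d. Qed.
Lemma to_mul x y : to_mc (Cmult x y) = to_mc x * to_mc y.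
Proof. by case: x => a b; case: y => c d. Qed.
Lemma to_opp x : to_mc (Copp x) = - to_mc x.
Proof. by case: x => a b. Qed.
Lemma to_0 : to_mc (RtoC 0%R) = 0. Proof. by []. Qed.
Lemma to_1 : to_mc (RtoC 1%R) = 1. Proof. by []. Qed.
Lemma to_inj x y : to_mc x = to_mc y -> x = y.
Proof. by move=> h; rewrite -(of_to x) h of_to. Qed.

Lemma peval_mc l z : to_mc (peval l z) = (Poly (map to_mc l)).[to_mc z].
Proof.
rewrite horner_Poly; elim: l => [|a l IH] //=.
by rewrite to_add to_mul IH addrC mulrC.
Qed.

Lemma last_map_mc l : to_mc (List.last l (RtoC 0%R)) = last 0 (map to_mc l).
Proof. by elim: l => [|a l IH] //=; case: l IH. Qed.

Lemma map_List {A B} (f : A -> B) l : List.map f l = map f l.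
Proof. by elim: l => //= a l ->. Qed.
Lemma length_List {A} (l : list A) : List.length l = size l.
Proof. by elim: l => //= a l ->. Qed.

Lemma prod_mc z bs : to_mc (prodC (List.map (fun b => Cminus z b) bs))
  = \prod_(x <- map to_mc bs) (to_mc z - x).
Proof.
elim: bs => [|b bs IH]; first by rewrite big_nil.
by rewrite /= big_cons to_mul -IH /Cminus to_add to_opp.
Qed.

Theorem factor_C (l : list C) : List.last l (RtoC 0%R) <> RtoC 0%R ->
  exists bs : list C, List.length bs = Nat.pred (List.length l) /\
   forall z, peval l z = Cmult (List.last l (RtoC 0%R)) (prodC (List.map (fun b => Cminus z b) bs)).
Proof.
move=> hl.
have hl' : last 0 (map to_mc l) != 0.
  by rewrite -last_map_mc -to_0; apply/eqP => /to_inj.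
set p := Poly (map to_mc l).
have sp : size p = size (map to_mc l) by rewrite /p (PolyK hl').
have lc : lead_coef p = last 0 (map to_mc l).
  rewrite /lead_coef sp /p (PolyK hl') (last_nth 0).
  by case: (map to_mc l).
have [r Dp] := closed_field_poly_normal p.
exists (map of_mc r); rewrite !length_List; split.
  have : size p = (size r).+1.
    by rewrite Dp size_scale ?size_prod_XsubC // lc.
  by rewrite sp size_map size_map => ->.

move=> z; apply: to_inj.
rewrite to_mul prod_mc peval_mc -/p last_map_mc -lc.
rewrite {1}Dp hornerZ horner_prod -map_comp.
congr (_ * _).
rewrite big_map; apply: eq_bigr => i _ /=.
by rewrite hornerXsubC to_of.
Qed.
End MCT.
Theorem factor_C (l : list C) : last l (RtoC 0) <> RtoC 0 ->
  exists bs, length bs = pred (length l) /\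
   forall z, peval l z = (last l (RtoC 0) * prodC (map (fun b => z - b) bs))%C.
Proof. exact (MCT.factor_C l). Qed.


Lemma prodC_map_zero (bs : list C) r : In r bs -> prodC (map (fun b => r - b)%C bs) = RtoC 0.
Proof.
  induction bs as [|b bs IH]; simpl; intros H; [contradiction|].
  destruct H as [->|H].
  - replace (r - r)%C with (RtoC 0) by ring. ring.
  - rewrite IH by auto. ring.
Qed.

Lemma poly_root n f : is_pol n f -> (exists z1 z2, f z1 <> f z2) -> exists r, f r = RtoC 0.
Proof.
  intros [c [l [_ [_ Hf]]]] [z1 [z2 Hz]].
  destruct (strip l) as [l' [E [Hn|Hl]]].
  - subst. exfalso. apply Hz. rewrite !Hf, !E. reflexivity.
  - destruct l' as [|a [|a' l'']].
    + simpl in Hl. congruence.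
    + exfalso. apply Hz. rewrite !Hf, !E. simpl. ring.
    + destruct (factor_C _ Hl) as [bs [Hb Hp]].
      simpl in Hb. destruct bs as [|b bs]; [simpl in Hb; lia|].
      exists b. rewrite Hf, E, Hp. rewrite prodC_map_zero by (left; auto). ring.
Qed.

Lemma poly_factor n c f : is_pd n c f -> c <> RtoC 0 ->
  exists bs, length bs = n /\ forall z, f z = (c * prodC (map (fun b => z - b)%C bs))%C.
Proof.
  intros [l [Hl [Hc Hf]]] Hc0. rewrite <- Hc in Hc0.
  destruct (factor_C _ Hc0) as [bs [Hb Hp]].
  exists bs. split; [rewrite Hb, Hl; reflexivity|].
  intros z. rewrite Hf, Hp, Hc. reflexivity.
Qed.

Lemma conj_unit g : Cmod g = 1 -> (g * Cconj g)%C = RtoC 1.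
Proof. intros H. rewrite <- Cmod2_conj, H. unfold RtoC. f_equal; simpl; ring. Qed.

Lemma pd_Pz a : is_pd (length a) (RtoC 1) (Pz a).
Proof.
  induction a as [|x a IH].
  - eapply pd_ext; [|apply pd_const]. intros; reflexivity.
  - simpl. replace (RtoC 1) with (RtoC 1 * RtoC 1)%C by ring.
    eapply pd_ext; [|apply (pd_mul_lin (- x)%C (RtoC 1)); exact IH].
    intros z. unfold Pz; simpl. ring.
Qed.

Definition Qc (a : list C) : C := prodC (map (fun x => - Cconj x)%C a).

Lemma pd_Ps a : is_pd (length a) (Qc a) (Ps a).
Proof.
  induction a as [|x a IH].
  - eapply pd_ext; [|apply pd_const]. intros; reflexivity.
  - simpl. unfold Qc; simpl.
    eapply pd_ext; [|apply (pd_mul_lin (RtoC 1) (- Cconj x)%C); exact IH].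
    intros z. unfold Ps; simpl. ring.
Qed.

Lemma Qc_conj a : Cconj (Qc a) = Pz a (RtoC 0).
Proof.
  induction a as [|x a IH]; unfold Qc, Pz in *; simpl.
  - apply Cconj_RtoC.
  - rewrite Cmult_conj, IH, Copp_conj, Cconj_conj. ring.
Qed.

Lemma Ps_0 a : Ps a (RtoC 0) = RtoC 1.
Proof. induction a as [|x a IH]; unfold Ps in *; simpl; [reflexivity|]. rewrite IH. ring. Qed.

Lemma Cmod_Qc a : List.Forall in_disk a -> Cmod (Qc a) <= 1.
Proof.
  intros Ha. induction Ha; unfold Qc in *; simpl.
  - rewrite Cmod_1; lra.
  - rewrite Cmod_mult, Cmod_opp, Cmod_conj. unfold in_disk in H.
    pose proof (Cmod_ge_0 x). pose proof (Cmod_ge_0 (prodC (map (fun x0 : C => (- Cconj x0)%C) l))). nra.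
Qed.

Lemma Ps_recip a z : z <> RtoC 0 ->
  Ps a z = (z ^ length a * Cconj (Pz a (/ Cconj z)))%C.
Proof.
  intros Hz. assert (Hcz : Cconj z <> RtoC 0).
  { intro E. apply Hz. rewrite <- (Cconj_conj z), E. apply Cconj_RtoC. }
  induction a as [|x a IH]; unfold Ps, Pz in *; simpl.
  - rewrite Cconj_RtoC. ring.
  - rewrite IH, Cmult_conj, Cminus_conj, Cinv_conj by auto. repeat rewrite Cconj_conj.
    field. auto.
Qed.

Lemma Pz_recip a z : z <> RtoC 0 ->
  Pz a z = (z ^ length a * Cconj (Ps a (/ Cconj z)))%C.
Proof.
  intros Hz. assert (Hcz : Cconj z <> RtoC 0).
  { intro E. apply Hz. rewrite <- (Cconj_conj z), E. apply Cconj_RtoC. }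
  induction a as [|x a IH]; unfold Ps, Pz in *; simpl.
  - rewrite Cconj_RtoC. ring.
  - rewrite IH, Cmult_conj, Cminus_conj, Cmult_conj, Cinv_conj, Cconj_conj, Cconj_RtoC by auto.
    repeat rewrite Cconj_conj. field. auto.
Qed.

Lemma factor_ge s x : 1 <= Cmod s -> in_disk x ->
  Cmod (1 - Cconj x * s)%C <= Cmod (s - x)%C.
Proof.
  intros Hs Hx. apply in_disk_sq in Hx.
  assert (Hs2 : 1 <= fst s ^ 2 + snd s ^ 2).
  { rewrite <- Cmod_sq. nra. }
  assert (H : fst (1 - Cconj x * s)%C ^ 2 + snd (1 - Cconj x * s)%C ^ 2 <=
              fst (s - x)%C ^ 2 + snd (s - x)%C ^ 2).
  { destruct x as [x1 x2], s as [s1 s2]. simpl in *.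
    assert (0 <= (1 - (x1^2+x2^2)) * ((s1^2+s2^2) - 1)) by (apply Rmult_le_pos; lra).
    nra. }
  rewrite <- !Cmod_sq in H. pose proof (Cmod_ge_0 (1 - Cconj x * s)%C).
  pose proof (Cmod_ge_0 (s - x)%C). nra.
Qed.

Lemma Ps_le_Pz a s : 1 <= Cmod s -> List.Forall in_disk a -> Cmod (Ps a s) <= Cmod (Pz a s).
Proof.
  intros Hs Ha. induction Ha; unfold Ps, Pz in *; simpl.
  - lra.
  - rewrite !Cmod_mult. pose proof (factor_ge s x Hs H).
    apply Rmult_le_compat; auto using Cmod_ge_0.
Qed.

Lemma Pz_zero a s : Pz a s = RtoC 0 -> In s a.
Proof.
  unfold Pz. intros H. apply prodC_zero in H. apply in_map_iff in H.
  destruct H as [x [Hx Hin]].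
  replace s with ((s - x) + x)%C by ring. rewrite Hx.
  replace (RtoC 0 + x)%C with x by ring. exact Hin.
Qed.

Definition mob (w v : C) : C := ((v - w) / (1 - Cconj w * v))%C.

Theorem mob_formula g a w : Cmod g = 1 -> List.Forall in_disk a -> in_disk w ->
  exists g' b, Cmod g' = 1 /\ length b = length a /\ List.Forall in_disk b /\
    forall z, in_disk z -> mob w (blaschke_formula g a z) = blaschke_formula g' b z.
Proof.
  intros Hg Ha Hw.
  set (n := length a).
  set (c := (g * RtoC 1 + (- w) * Qc a)%C).
  assert (Hpd : is_pd n c (fun z => g * Pz a z + (- w) * Ps a z)%C).
  { apply pd_add; apply pd_scal; [apply pd_Pz|apply pd_Ps]. }
  assert (Hc : c <> RtoC 0).
  { intro E. assert (E' : g = (w * Qc a)%C).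
    { replace g with (c + w * Qc a)%C by (unfold c; ring). rewrite E. ring. }
    apply (f_equal Cmod) in E'. rewrite Cmod_mult, Hg in E'.
    pose proof (Cmod_Qc a Ha). unfold in_disk in Hw. pose proof (Cmod_ge_0 w).
    pose proof (Cmod_ge_0 (Qc a)). nra. }
  destruct (poly_factor _ _ _ Hpd Hc) as [bs [Hbs Hf]].
  assert (Hgne : g <> RtoC 0).
  { intro E. rewrite E, Cmod_0 in Hg. lra. }
  assert (Hbd : List.Forall in_disk bs).
  { apply List.Forall_forall. intros s Hs.
    destruct (Rlt_or_le (Cmod s) 1) as [Hlt|Hge]; [exact Hlt|exfalso].
    assert (E : (g * Pz a s + - w * Ps a s)%C = RtoC 0).
    { rewrite Hf. rewrite prodC_map_zero by auto. ring. }
    assert (E2 : (g * Pz a s)%C = (w * Ps a s)%C).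
    { replace (g * Pz a s)%C with ((g * Pz a s + - w * Ps a s) + w * Ps a s)%C by ring.
      rewrite E. ring. }
    apply (f_equal Cmod) in E2. rewrite !Cmod_mult, Hg in E2.
    pose proof (Ps_le_Pz a s Hge Ha). unfold in_disk in Hw.
    pose proof (Cmod_ge_0 w). pose proof (Cmod_ge_0 (Ps a s)).
    assert (Hz : Cmod (Pz a s) = 0) by nra.
    apply Cmod_eq_0, Pz_zero in Hz.
    rewrite List.Forall_forall in Ha. specialize (Ha _ Hz). unfold in_disk in Ha. lra. }
  assert (Hden : forall z, (Ps a z - Cconj w * g * Pz a z)%C = (g * Cconj c * Ps bs z)%C).
  { intros z. destruct (Ceq_dec z (RtoC 0)) as [Hz|Hz].
    - subst z. rewrite !Ps_0. unfold c. rewrite Cplus_conj, !Cmult_conj, Copp_conj, Qc_conj, Cconj_RtoC.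
      pose proof (conj_unit g Hg). 
      transitivity ((g * Cconj g) - Cconj w * g * Pz a (RtoC 0))%C; [rewrite H; ring|ring].
    - assert (Hcz : Cconj z <> RtoC 0).
      { intro E. apply Hz. rewrite <- (Cconj_conj z), E. apply Cconj_RtoC. }
      rewrite (Ps_recip a z Hz), (Pz_recip a z Hz), (Ps_recip bs z Hz).
      specialize (Hf (/ Cconj z)%C). fold (Pz bs (/ Cconj z)) in Hf.
      assert (Hf' : Cconj (g * Pz a (/ Cconj z) + - w * Ps a (/ Cconj z))%C
                    = Cconj (c * Pz bs (/ Cconj z))%C) by (rewrite Hf; reflexivity).
      rewrite Cplus_conj, !Cmult_conj, Copp_conj in Hf'.
      rewrite Hbs. fold n.
      pose proof (conj_unit g Hg).
      transitivity (g * (z ^ n * (Cconj g * Cconj (Pz a (/ Cconj z)) + - Cconj w * Cconj (Ps a (/ Cconj z)))))%C.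
      + transitivity ((g * Cconj g) * z ^ n * Cconj (Pz a (/ Cconj z)) - Cconj w * g * (z ^ n * Cconj (Ps a (/ Cconj z))))%C; [rewrite H; ring| ring].
      + rewrite Hf'. ring. }
  exists (c / (g * Cconj c))%C, bs. repeat split.
  - assert (Hcc : Cconj c <> RtoC 0).
    { intro E. apply Hc. rewrite <- (Cconj_conj c), E. apply Cconj_RtoC. }
    rewrite Cmod_div by (apply Cmult_neq_0; auto).
    rewrite Cmod_mult, Cmod_conj, Hg. field. apply Rgt_not_eq. apply Cmod_gt_0. auto.
  - rewrite Hbs. reflexivity.
  - exact Hbd.
  - intros z Hz.
    assert (HPs : Ps a z <> RtoC 0) by (apply Ps_ne0; auto).
    assert (HPsb : Ps bs z <> RtoC 0) by (apply Ps_ne0; auto).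
    assert (Hcc : Cconj c <> RtoC 0).
    { intro E. apply Hc. rewrite <- (Cconj_conj c), E. apply Cconj_RtoC. }
    assert (HF : (1 - Cconj w * blaschke_formula g a z)%C <> RtoC 0).
    { intro E. assert (E' : (Cconj w * blaschke_formula g a z)%C = RtoC 1).
      { replace (Cconj w * blaschke_formula g a z)%C with (1 - (1 - Cconj w * blaschke_formula g a z))%C by ring.
        rewrite E; ring. }
      apply (f_equal Cmod) in E'. rewrite Cmod_mult, Cmod_conj, Cmod_1, formula_bprod, Cmod_mult, Hg in E'.
      pose proof (bprod_le a z Ha Hz). unfold in_disk in Hw. pose proof (Cmod_ge_0 w).
      pose proof (Cmod_ge_0 (bprod a z)). nra. }
    unfold mob in *. rewrite !formula_bprod in *.
    rewrite (bprod_PP a z) in * by (intros x Hx; apply disk_ne; auto; rewrite List.Forall_forall in Ha; auto).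
    rewrite (bprod_PP bs z) by (intros x Hx; apply disk_ne; auto; rewrite List.Forall_forall in Hbd; auto).
    specialize (Hf z). fold (Pz bs z) in Hf. specialize (Hden z).
    assert (E1 : ((g * (Pz a z / Ps a z) - w) / (1 - Cconj w * (g * (Pz a z / Ps a z))))%C
              = ((g * Pz a z + - w * Ps a z) / (Ps a z - Cconj w * g * Pz a z))%C).
    { field. split; auto. intro E. apply HF. 
      replace (1 - Cconj w * (g * (Pz a z / Ps a z)))%C with ((Ps a z - Cconj w * g * Pz a z) / Ps a z)%C
        by (field; auto). rewrite E. field. auto. }
    rewrite E1, Hf, Hden. field. repeat split; auto.
Qed.

Definition hh (y z : C) : C := ((z - y) * (1 - Cconj y * z))%C.
Definition wgt (x : C) : C := RtoC (1 - Cmod x ^ 2).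
Definition prodH (V : list C) (z : C) : C := prodC (map (fun y => hh y z) V).
Definition rmv (x : C) (U : list C) : list C := remove Ceq_dec x U.
Definition Nf (U b : list C) (z : C) : C :=
  fold_right Cplus (RtoC 0) (map (fun x => wgt x * prodH (rmv x U) z)%C b).

Lemma wgt_C x : wgt x = (1 - Cconj x * x)%C.
Proof.
  unfold wgt. rewrite RtoC_minus, Cmod2_conj. ring.
Qed.

Lemma Cconj_wgt x y : Cconj (wgt x * y)%C = (wgt x * Cconj y)%C.
Proof. rewrite Cmult_conj. unfold wgt. rewrite Cconj_RtoC. reflexivity. Qed.

Lemma prodH_zero V u : In u V -> prodH V u = RtoC 0.
Proof.
  unfold prodH. induction V as [|y V IH]; simpl; intros H; [contradiction|].
  destruct H as [->|H].
  - unfold hh. replace (u - u)%C with (RtoC 0) by ring. ring.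
  - rewrite IH by auto. ring.
Qed.

Lemma hh_ne y z : in_disk y -> in_disk z -> y <> z -> hh y z <> RtoC 0.
Proof.
  intros Hy Hz Hne E. unfold hh in E. destruct (Cmult_integral _ _ E) as [E1|E1].
  - apply Hne. replace z with ((z - y) + y)%C by ring. rewrite E1. ring.
  - exact (disk_ne y z Hy Hz E1).
Qed.

Lemma prodH_ne V z : List.Forall in_disk V -> in_disk z -> ~ In z V -> prodH V z <> RtoC 0.
Proof.
  intros HV Hz Hn. unfold prodH. apply prodC_ne0. intros x Hx.
  apply in_map_iff in Hx. destruct Hx as [y [<- Hy]]. apply hh_ne; auto.
  - rewrite List.Forall_forall in HV; auto.
  - intro E; subst; auto.
Qed.

Lemma rmv_length x U : NoDup U -> In x U -> length (rmv x U) = Nat.pred (length U).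
Proof.
  unfold rmv. induction U as [|y U IH]; simpl; intros Hd Hx; [contradiction|].
  inversion Hd; subst.
  destruct (Ceq_dec x y) as [->|Hne].
  - rewrite notin_remove by auto. reflexivity.
  - destruct Hx as [->|Hx]; [congruence|]. simpl. rewrite IH by auto.
    destruct U; [contradiction|]. reflexivity.
Qed.

Lemma prod_remove x U z : NoDup U -> In x U -> prodH U z = (hh x z * prodH (rmv x U) z)%C.
Proof.
  unfold rmv, prodH. induction U as [|y U IH]; simpl; intros Hd Hx; [contradiction|].
  inversion Hd; subst.
  destruct (Ceq_dec x y) as [->|Hne].
  - rewrite notin_remove by auto. reflexivity.
  - destruct Hx as [->|Hx]; [congruence|]. simpl. rewrite IH by auto. ring.
Qed.

Lemma pd_zero n : is_pd n (RtoC 0) (fun _ => RtoC 0).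
Proof.
  exists (repeat (RtoC 0) (S n)). repeat split.
  - apply repeat_length.
  - induction n; simpl; auto.
  - intros z. induction n; simpl; [ring|]. simpl in IHn. rewrite <- IHn. ring.
Qed.

Lemma pd_prodH V : exists c, is_pd (2 * length V) c (prodH V).
Proof.
  induction V as [|y V [c IH]].
  - exists (RtoC 1). eapply pd_ext; [|apply pd_const]. intros; reflexivity.
  - exists (- Cconj y * (RtoC 1 * c))%C.
    replace (2 * length (y :: V))%nat with (S (S (2 * length V))) by (simpl; lia).
    eapply pd_ext; [|apply (pd_mul_lin (RtoC 1) (- Cconj y)%C); apply (pd_mul_lin (- y)%C (RtoC 1)); exact IH].
    intros z. unfold prodH, hh. simpl. ring.
Qed.

Lemma pol_Nf U b e : (forall x, In x b -> length (rmv x U) = e) -> is_pol (2 * e) (Nf U b).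
Proof.
  induction b as [|x b IH]; intros H.
  - exists (RtoC 0). eapply pd_ext; [|apply pd_zero]. intros; reflexivity.
  - destruct IH as [c1 H1]; [intros; apply H; simpl; auto|].
    destruct (pd_prodH (rmv x U)) as [c2 H2].
    rewrite (H x (or_introl eq_refl)) in H2.
    exists (wgt x * c2 + c1)%C. eapply pd_ext; [|apply pd_add; [apply pd_scal; exact H2|exact H1]].
    intros z; reflexivity.
Qed.

Lemma Nf_Lsum U b z : NoDup U -> (forall x, In x b -> In x U) ->
  (forall y, In y U -> (z - y)%C <> RtoC 0 /\ (1 - Cconj y * z)%C <> RtoC 0) ->
  Nf U b z = (Lsum b z * prodH U z)%C.
Proof.
  intros Hd Hb Hz. induction b as [|x b IH]; unfold Nf, Lsum in *; simpl.
  - ring.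
  - rewrite IH by (intros; apply Hb; simpl; auto).
    rewrite (prod_remove x U z Hd (Hb x (or_introl eq_refl))).
    destruct (Hz x (Hb x (or_introl eq_refl))) as [H1 H2].
    rewrite wgt_C. unfold gL, hh. field. auto.
Qed.

Fixpoint Sw (u : C) (b : list C) : R :=
  match b with nil => 0 | x :: b' => (if Ceq_dec x u then 1 - Cmod u ^ 2 else 0) + Sw u b' end.

Lemma Nf_at U b u : In u U -> Nf U b u = (RtoC (Sw u b) * prodH (rmv u U) u)%C.
Proof.
  intros Hu. induction b as [|x b IH]; unfold Nf in *; cbn [fold_right map Sw].
  - ring.
  - rewrite IH. destruct (Ceq_dec x u) as [->|Hne].
    + unfold wgt. rewrite RtoC_plus. ring.
    + rewrite (prodH_zero (rmv x U) u). 
      * rewrite RtoC_plus. replace (RtoC 0) with (RtoC 0%R) by reflexivity. ring.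
      * apply in_in_remove; auto.
Qed.

Lemma Sw_pos u b : in_disk u -> In u b -> 0 < Sw u b.
Proof.
  intros Hu. assert (Hp : 0 < 1 - Cmod u ^ 2).
  { unfold in_disk in Hu. pose proof (Cmod_ge_0 u). nra. }
  assert (Hnn : forall b, 0 <= Sw u b).
  { induction b0 as [|x b0 IH]; simpl; [lra|]. destruct (Ceq_dec x u); lra. }
  induction b as [|x b IH]; simpl; intros H; [contradiction|].
  destruct (Ceq_dec x u) as [->|Hne].
  - specialize (Hnn b). lra.
  - destruct H as [->|H]; [congruence|]. specialize (IH H). lra.
Qed.

Lemma Nf_ne_at U b u : List.Forall in_disk U -> In u U -> In u b ->
  Nf U b u <> RtoC 0.
Proof.
  intros HU Hu Hb E. rewrite (Nf_at U b u Hu) in E.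
  assert (Hud : in_disk u) by (rewrite List.Forall_forall in HU; auto).
  destruct (Cmult_integral _ _ E) as [E1|E1].
  - apply (f_equal fst) in E1. simpl in E1. pose proof (Sw_pos u b Hud Hb). lra.
  - revert E1. apply prodH_ne; auto.
    + rewrite List.Forall_forall in *. intros y Hy. apply in_remove in Hy. apply HU. tauto.
    + intro H. apply in_remove in H. tauto.
Qed.


Definition prodR (V : list C) (z : C) : R := fold_right Rmult 1 (map (fun y => Cmod (z - y)%C ^ 2) V).

Lemma hh_circle y z : Cmod z = 1 -> hh y z = (z * RtoC (Cmod (z - y)%C ^ 2))%C.
Proof.
  intros Hz. pose proof (conj_unit z Hz) as E. unfold hh.
  rewrite Cmod2_conj, Cminus_conj.
  replace (1 - Cconj y * z)%C with (z * Cconj z - Cconj y * z)%C by (rewrite E; reflexivity).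
  ring.
Qed.

Lemma prodH_circle V z : Cmod z = 1 -> prodH V z = (z ^ length V * RtoC (prodR V z))%C.
Proof.
  intros Hz. induction V as [|y V IH]; unfold prodH, prodR, prodC in *; cbn [fold_right map length Cpow].
  - ring.
  - rewrite IH, hh_circle by auto. rewrite RtoC_mult. ring.
Qed.

Lemma prodR_pos V z : List.Forall in_disk V -> Cmod z = 1 -> 0 < prodR V z.
Proof.
  intros HV Hz. induction HV; unfold prodR in *; simpl; [lra|].
  apply Rmult_lt_0_compat; auto.
  assert (0 < Cmod (z - x)%C).
  { apply Cmod_gt_0. intro E. assert (z = x).
    { replace z with ((z - x) + x)%C by ring. rewrite E. ring. }
    subst. unfold in_disk in H. lra. }
  nra.
Qed.

Fixpoint Sr (U : list C) (z : C) (b : list C) : R :=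
  match b with nil => 0 | x :: b' => (1 - Cmod x ^ 2) * prodR (rmv x U) z + Sr U z b' end.

Lemma Nf_circle U b z e : Cmod z = 1 -> (forall x, In x b -> length (rmv x U) = e) ->
  Nf U b z = (z ^ e * RtoC (Sr U z b))%C.
Proof.
  intros Hz He. induction b as [|x b IH]; unfold Nf in *; cbn [fold_right map Sr].
  - replace (RtoC 0) with (RtoC 0%R) by reflexivity. ring.
  - rewrite IH by (intros; apply He; simpl; auto).
    rewrite prodH_circle by auto. rewrite He by (simpl; auto).
    unfold wgt. rewrite RtoC_plus, RtoC_mult. ring.
Qed.

Lemma Sr_pos U z b : List.Forall in_disk U -> List.Forall in_disk b -> b <> nil -> Cmod z = 1 ->
  0 < Sr U z b.
Proof.
  intros HU Hb Hne Hz.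
  assert (Hrm : forall x, List.Forall in_disk (rmv x U)).
  { intros x. rewrite List.Forall_forall in HU |- *. intros y Hy. apply in_remove in Hy. apply HU; tauto. }
  assert (Hnn : forall b, List.Forall in_disk b -> 0 <= Sr U z b).
  { intros b0 Hb0. induction Hb0; cbn [Sr]; [lra|].
    pose proof (prodR_pos (rmv x U) z (Hrm x) Hz). unfold in_disk in H.
    pose proof (Cmod_ge_0 x). assert (0 <= 1 - Cmod x ^ 2) by nra.
    apply Rplus_le_le_0_compat; [apply Rmult_le_pos; lra|lra]. }
  destruct Hb as [|x b Hx Hb]; [congruence|]. cbn [Sr].
  pose proof (prodR_pos (rmv x U) z (Hrm x) Hz). unfold in_disk in Hx.
  pose proof (Cmod_ge_0 x). pose proof (Hnn b Hb). assert (0 < 1 - Cmod x ^ 2) by nra.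
  apply Rplus_lt_le_0_compat; [apply Rmult_lt_0_compat; lra|lra].
Qed.

Lemma conj_ne0 z : z <> RtoC 0 -> Cconj z <> RtoC 0.
Proof. intros Hz E. apply Hz. rewrite <- (Cconj_conj z), E. apply Cconj_RtoC. Qed.

Lemma hh_sym y z : z <> RtoC 0 -> hh y z = (z ^ 2 * Cconj (hh y (/ Cconj z)))%C.
Proof.
  intros Hz. pose proof (conj_ne0 z Hz). unfold hh.
  rewrite !Cmult_conj, !Cminus_conj, Cmult_conj, Cinv_conj, Cconj_RtoC by auto.
  repeat rewrite Cconj_conj. field. auto.
Qed.

Lemma prodH_sym V z : z <> RtoC 0 ->
  prodH V z = (z ^ (2 * length V) * Cconj (prodH V (/ Cconj z)))%C.
Proof.
  intros Hz. induction V as [|y V IH]; unfold prodH, prodC in *; cbn [fold_right map].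
  - simpl. rewrite Cconj_RtoC. ring.
  - rewrite IH, (hh_sym y z Hz), Cmult_conj.
    replace (2 * length (y :: V))%nat with (2 + 2 * length V)%nat by (simpl; lia).
    rewrite Cpow_add_r. ring.
Qed.

Lemma Nf_sym U b z e : z <> RtoC 0 -> (forall x, In x b -> length (rmv x U) = e) ->
  Nf U b z = (z ^ (2 * e) * Cconj (Nf U b (/ Cconj z)))%C.
Proof.
  intros Hz He. induction b as [|x b IH]; unfold Nf in *; cbn [fold_right map].
  - rewrite Cconj_RtoC. ring.
  - rewrite IH by (intros; apply He; simpl; auto).
    rewrite (prodH_sym _ z Hz), He by (simpl; auto).
    rewrite Cplus_conj, Cconj_wgt. ring.
Qed.

Lemma two_pow_ne e : (1 <= e)%nat -> (RtoC 2 ^ (2 * e))%C <> RtoC 1.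
Proof.
  intros He E. rewrite <- RtoC_pow in E. apply (f_equal fst) in E.
  assert (E' : 2 ^ (2 * e) = 1) by exact E. clear E.
  assert (H : 2 ^ 2 <= 2 ^ (2 * e)) by (apply Rle_pow; lia || lra).
  lra.
Qed.

Lemma exists_crit b : List.Forall in_disk b -> (exists x y, In x b /\ In y b /\ x <> y) ->
  exists r, in_disk r /\ ~ In r b /\ Lsum b r = RtoC 0.
Proof.
  intros Hb [x [y [Hx [Hy Hxy]]]].
  set (U := nodup Ceq_dec b).
  assert (Hd : NoDup U) by apply NoDup_nodup.
  assert (HU : forall t, In t U <-> In t b) by (intros; apply nodup_In).
  assert (HUd : List.Forall in_disk U).
  { rewrite List.Forall_forall in Hb |- *. intros t Ht. apply Hb, HU, Ht. }
  set (e := Nat.pred (length U)).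
  assert (He : forall t, In t b -> length (rmv t U) = e).
  { intros t Ht. apply rmv_length; [auto|apply HU; auto]. }
  assert (He1 : (1 <= e)%nat).
  { rewrite <- (He x Hx). destruct (rmv x U) eqn:E; [|simpl; lia].
    exfalso. assert (Hin : In y (rmv x U)) by (apply in_in_remove; [auto|apply HU; auto]).
    rewrite E in Hin; contradiction. }
  assert (Hbne : b <> nil) by (intro; subst; contradiction).
  set (N := Nf U b).
  assert (Hcirc : forall z, Cmod z = 1 -> N z <> RtoC 0).
  { intros z Hz. unfold N. rewrite (Nf_circle U b z e Hz He). intro E.
    destruct (Cmult_integral _ _ E) as [E1|E1].
    - apply (Cpow_nz z e); auto. intro E2; subst; rewrite Cmod_0 in Hz; lra.
    - apply (f_equal fst) in E1. simpl in E1. pose proof (Sr_pos U z b HUd Hb Hbne Hz). lra. }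
  assert (H10 : RtoC 1 <> RtoC 0) by (intro E; apply (f_equal fst) in E; simpl in E; lra).
  assert (H20 : RtoC 2 <> RtoC 0) by (intro E; apply (f_equal fst) in E; simpl in E; lra).
  assert (Hnc : exists z1 z2, N z1 <> N z2).
  { apply NNPP. intro Hc.
    assert (Hall : forall z, N z = N (RtoC 1)).
    { intros z. apply NNPP. intro H. apply Hc. exists z, (RtoC 1). auto. }
    set (K := N (RtoC 1)) in *.
    assert (HK : K <> RtoC 0) by (apply Hcirc; rewrite Cmod_1; reflexivity).
    assert (H1 : K = Cconj K).
    { unfold K at 1. unfold N. rewrite (Nf_sym U b (RtoC 1) e H10 He). fold N.
      rewrite (Hall (/ Cconj (RtoC 1))%C). fold K. rewrite Cpow_1_l. ring. }
    assert (H2' : N (RtoC 2) = (RtoC 2 ^ (2 * e) * K)%C).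
    { unfold N. rewrite (Nf_sym U b (RtoC 2) e H20 He). fold N.
      rewrite (Hall (/ Cconj (RtoC 2))%C). rewrite <- H1. reflexivity. }
    assert (H2 : K = (RtoC 2 ^ (2 * e) * K)%C) by (rewrite <- H2', Hall; reflexivity).
    apply (two_pow_ne e He1).
    replace (RtoC 2 ^ (2 * e))%C with ((RtoC 2 ^ (2 * e) * K) / K)%C by (field; auto).
    rewrite <- H2. field. auto. }
  destruct (poly_root _ _ (pol_Nf U b e He) Hnc) as [s Hs]. fold N in Hs.
  assert (Hmain : forall r, in_disk r -> N r = RtoC 0 -> exists r, in_disk r /\ ~ In r b /\ Lsum b r = RtoC 0).
  { intros r Hr HNr. exists r.
    assert (HrU : ~ In r U).
    { intro Hin. apply (Nf_ne_at U b r HUd Hin); [apply HU; auto|]. exact HNr. }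
    split; [auto|split].
    - intro Hin. apply HrU, HU, Hin.
    - unfold N in HNr. rewrite Nf_Lsum in HNr.
      + destruct (Cmult_integral _ _ HNr) as [E|E]; [exact E|].
        exfalso. revert E. apply prodH_ne; auto.
      + exact Hd.
      + intros t Ht. apply HU; auto.
      + intros t Ht. rewrite List.Forall_forall in HUd. split.
        * intro E. apply HrU. replace r with ((r - t) + t)%C by ring. rewrite E.
          replace (RtoC 0 + t)%C with t by ring. exact Ht.
        * apply disk_ne; auto. }
  destruct (Rtotal_order (Cmod s) 1) as [Hlt|[Heq|Hgt]].
  - apply (Hmain s); auto.
  - exfalso. exact (Hcirc s Heq Hs).
  - assert (Hs0 : s <> RtoC 0) by (intro E; subst; rewrite Cmod_0 in Hgt; lra).
    assert (Hcs : Cconj s <> RtoC 0) by (apply conj_ne0; auto).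
    assert (Hr0 : (/ Cconj s)%C <> RtoC 0).
    { intro E. apply (f_equal Cmod) in E. rewrite Cmod_inv, Cmod_0 in E by auto.
      apply Cmod_gt_0 in Hcs. pose proof (Rinv_0_lt_compat _ Hcs). lra. }
    apply (Hmain (/ Cconj s)%C).
    + unfold in_disk. rewrite Cmod_inv, Cmod_conj by auto.
      rewrite <- Rinv_1. apply Rinv_lt_contravar; lra.
    + unfold N. rewrite (Nf_sym U b (/ Cconj s)%C e Hr0 He). fold N.
      rewrite Cinv_conj, Cconj_conj by auto.
      replace (/ / s)%C with s by (field; auto). rewrite Hs, Cconj_RtoC. ring.
Qed.

Lemma NoDup_map_in {A B} (f : A -> B) l :
  (forall x y, In x l -> In y l -> f x = f y -> x = y) -> NoDup l -> NoDup (map f l).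
Proof.
  induction l as [|a l IH]; simpl; intros Hf Hd; constructor.
  - intro Hin. apply in_map_iff in Hin. destruct Hin as [x [Ex Hx]].
    inversion Hd; subst. assert (x = a) by (apply Hf; auto). subst. contradiction.
  - inversion Hd; subst. apply IH; auto.
Qed.

Lemma fold_mult_perm l l' : Permutation l l' ->
  fold_right Nat.mul 1%nat l = fold_right Nat.mul 1%nat l'.
Proof.
  induction 1; simpl; try lia.
Qed.

Lemma prod_upto_map p m : prod_upto p m = fold_right Nat.mul 1%nat (map p (seq 0 m)).
Proof.
  unfold prod_upto. induction (seq 0 m); simpl; auto.
Qed.

Lemma prod_upto_perm p m sigma : is_perm m sigma ->
  prod_upto (fun j => p (sigma j)) m = prod_upto p m.
Proof.
  intros [H1 H2]. rewrite !prod_upto_map.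
  replace (map (fun j => p (sigma j)) (seq 0 m)) with (map p (map sigma (seq 0 m)))
    by (rewrite map_map; reflexivity).
  apply fold_mult_perm. apply Permutation_map.
  apply Permutation_sym. apply NoDup_Permutation_bis.
  - apply seq_NoDup.
  - rewrite length_map. lia.
  - intros x Hx. apply in_map_iff. 
    assert (Hinc : incl (map sigma (seq 0 m)) (seq 0 m)).
    { intros y Hy. apply in_map_iff in Hy. destruct Hy as [i [<- Hi]].
      apply in_seq in Hi. apply in_seq. specialize (H1 i). lia. }
    assert (Hnd : NoDup (map sigma (seq 0 m))).
    { apply NoDup_map_in; [|apply seq_NoDup]. intros i j Hi Hj E.
      apply in_seq in Hi. apply in_seq in Hj. apply H2; lia. }
    assert (Hle : (length (seq 0 m) <= length (map sigma (seq 0 m)))%nat) by (rewrite length_map; lia).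
    pose proof (@NoDup_length_incl _ _ _ Hnd Hle Hinc x Hx) as Hx'.
    apply in_map_iff in Hx'. exact Hx'.
Qed.

Lemma mob_inv w v : in_disk w -> in_disk v -> mob (- w)%C (mob w v) = v.
Proof.
  intros Hw Hv. pose proof (disk_ne w v Hw Hv) as H1. pose proof (disk_ne w w Hw Hw) as H2.
  unfold mob. rewrite Copp_conj.
  assert (E : (1 - - Cconj w * ((v - w) / (1 - Cconj w * v)))%C = ((1 - Cconj w * w) / (1 - Cconj w * v))%C)
    by (field; auto).
  rewrite E. field. split; auto.
Qed.

Lemma mob_self w : in_disk w -> mob w w = RtoC 0.
Proof. intros Hw. unfold mob. pose proof (disk_ne w w Hw Hw). field. auto. Qed.

Lemma disk_open r : in_disk r -> @locally (AbsRing_UniformSpace C_AbsRing) r in_disk.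
Proof.
  intros Hr. unfold in_disk in Hr.
  assert (Hp : 0 < 1 - Cmod r) by lra.
  exists (mkposreal _ Hp). intros y Hy.
  change (Cmod (minus y r) < 1 - Cmod r) in Hy.
  unfold in_disk. pose proof (Cmod_triangle r (minus y r)).
  assert (Ey : (r + minus y r)%C = (y : C)).
  { change (Cplus r (Cminus (y : C) r) = (y : C)). ring. }
  rewrite Ey in H.
  lra.
Qed.

Lemma bf0 u : blaschke_factor (RtoC 0) u = u.
Proof. unfold blaschke_factor. rewrite Cconj_RtoC. field. Qed.

Lemma bprod_repeat c k u : bprod (repeat c k) u = (blaschke_factor c u ^ k)%C.
Proof. induction k; simpl; [reflexivity|]. rewrite IHk. reflexivity. Qed.

Lemma all_eq_repeat (b : list C) c : (forall x y, In x b -> In y b -> x = y) -> In c b ->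
  b = repeat c (length b).
Proof.
  intros H Hc. apply Forall_eq_repeat. apply List.Forall_forall. intros x Hx. apply H; auto.
Qed.

Lemma disk0 : in_disk (RtoC 0).
Proof. unfold in_disk. rewrite Cmod_0. lra. Qed.

Lemma disk_opp w : in_disk w -> in_disk (- w)%C.
Proof. unfold in_disk. rewrite Cmod_opp. auto. Qed.

Lemma Forall_repeat_disk c k : in_disk c -> List.Forall in_disk (repeat c k).
Proof. intros Hc. apply List.Forall_forall. intros x Hx. apply repeat_spec in Hx. subst; auto. Qed.

Lemma fold_pos (p : nat -> nat) l : (forall i, In i l -> (1 <= p i)%nat) ->
  (1 <= fold_right (fun j acc => (p j * acc)%nat) 1%nat l)%nat.
Proof.
  induction l as [|i l IH]; simpl; intros H; [lia|].
  assert (1 <= p i)%nat by auto. assert (1 <= fold_right (fun j acc => (p j * acc)%nat) 1%nat l)%nat by auto.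
  nia.
Qed.

Lemma length1 (b : list C) : length b = 1%nat -> exists c, b = c :: nil.
Proof. destruct b as [|c [|d b]]; simpl; intros H; try lia. exists c; auto. Qed.

Theorem corollary4p9 (m : nat) (p : nat -> nat) (B : C -> C) :
  (forall i, (i < m)%nat -> (2 <= p i)%nat) ->
  is_FBP (prod_upto p m) B ->
  (exists! w, critical_value B w) ->
  forall sigma : nat -> nat, is_perm m sigma ->
    exists Bs : nat -> C -> C,
      (forall j, (j < m)%nat -> is_FBP (p (sigma j)) (Bs j)) /\
      (forall z, in_disk z -> B z = compose_list Bs m z).
Proof.
  intros Hp HB Hu sigma Hsig.
  destruct HB as [g [a [Hg [Hlen [Ha HBf]]]]].
  destruct Hu as [w [[Hwd [z0 [Hz0 [Hcrit Hw0]]]] Huniq]].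
  assert (Hn1 : (1 <= prod_upto p m)%nat).
  { apply fold_pos. intros i Hi. apply in_seq in Hi. specialize (Hp i). lia. }
  set (n := prod_upto p m) in *.
  assert (Hane : a <> nil) by (intro E; subst; simpl in Hlen; lia).
  destruct (mob_formula g a w Hg Ha Hwd) as [g1 [b [Hg1 [Hlb [Hb Hmob]]]]].
  assert (HC : forall z, in_disk z -> mob w (B z) = blaschke_formula g1 b z).
  { intros z Hz. rewrite HBf by auto. auto. }
  assert (HBd : forall z, in_disk z -> in_disk (B z)).
  { intros z Hz. rewrite HBf by auto. apply formula_lt; auto. }
  assert (HBpsi : forall z, in_disk z -> B z = mob (- w)%C (blaschke_formula g1 b z)).
  { intros z Hz. rewrite <- HC by auto. rewrite mob_inv; auto. }
  assert (Hbne : b <> nil) by (intro E; subst; simpl in Hlb; lia).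
  assert (Hg1ne : g1 <> RtoC 0) by (intro E; rewrite E, Cmod_0 in Hg1; lra).
  assert (Hloc : forall r (f1 f2 : C -> C), in_disk r -> (forall t, in_disk t -> f1 t = f2 t) ->
            CD f1 r (RtoC 0) -> CD f2 r (RtoC 0)).
  { intros r f1 f2 Hr Hf D. eapply (@is_derive_ext_loc C_AbsRing C_NormedModule); [|exact D].
    destruct (disk_open r Hr) as [eps Heps]. exists eps. intros y Hy. apply Hf. apply Heps; auto. }
  assert (Hall : forall x y, In x b -> In y b -> x = y).
  { apply NNPP; intro Hne.
    assert (Hex : exists x y, In x b /\ In y b /\ x <> y).
    { apply NNPP; intro H. apply Hne. intros x y Hx Hy. apply NNPP; intro Hxy.
      apply H. exists x, y. auto. }
    destruct (exists_crit b Hb Hex) as [r [Hr [Hrb HL]]].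
    assert (HD : CD (blaschke_formula g1 b) r (RtoC 0)).
    { eapply CD_eq; [apply CD_formula|].
      - intros x Hx. split.
        + intro E. apply Hrb. replace r with ((r - x) + x)%C by ring. rewrite E.
          replace (RtoC 0 + x)%C with x by ring. exact Hx.
        + apply disk_ne; auto. rewrite List.Forall_forall in Hb; auto.
      - rewrite HL. ring. }
    assert (Hu' : in_disk (blaschke_formula g1 b r)) by (apply formula_lt; auto).
    assert (HD2 : CD (fun t => mob (- w)%C (blaschke_formula g1 b t)) r (RtoC 0)).
    { eapply CD_eq; [apply (CD_comp (mob (- w)%C) (blaschke_formula g1 b));
        [apply CD_factor; apply disk_ne; auto using disk_opp|exact HD]|]. ring. }
    assert (HDB : CD B r (RtoC 0)).
    { apply (Hloc r (fun t => mob (- w)%C (blaschke_formula g1 b t)) B Hr); [|exact HD2]. intros t Ht. symmetry. apply HBpsi; auto. }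
    assert (Hcv : critical_value B (B r)).
    { unfold critical_value. split; [apply HBd; auto|]. exists r. split; [auto|split; [exact HDB|reflexivity]]. }
    specialize (Huniq _ Hcv).
    assert (E : blaschke_formula g1 b r = RtoC 0).
    { rewrite <- HC by auto. rewrite <- Huniq. apply mob_self; auto. }
    rewrite formula_bprod in E. destruct (Cmult_integral _ _ E) as [E1|E1]; [auto|].
    apply Hrb. apply bprod_zero; auto. intros x Hx. apply disk_ne; auto.
    rewrite List.Forall_forall in Hb; auto. }
  destruct b as [|c b']; [congruence|].
  assert (Hcd : in_disk c) by (inversion Hb; auto).
  assert (Hrep : c :: b' = repeat c n).
  { replace n with (length (c :: b')) by (rewrite Hlb; auto). apply all_eq_repeat; auto. left; auto. }
  rewrite Hrep in HBpsi, HC.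
  destruct m as [|M].
  { exfalso. simpl in n. subst n. simpl in Hrep. injection Hrep as Hb'. subst b'.
    assert (HD1 : CD (fun t => mob w (B t)) z0 (RtoC 0)).
    { eapply CD_eq; [apply (CD_comp (mob w) B); [apply CD_factor; apply disk_ne; auto|exact Hcrit]|].
      ring. }
    assert (HD2 : CD (blaschke_formula g1 (repeat c 1)) z0 (RtoC 0)).
    { apply (Hloc z0 (fun t => mob w (B t)) _ Hz0); [|exact HD1]. intros t Ht. apply HC; auto. }
    assert (Hn0 : (1 - Cconj c * z0)%C <> RtoC 0) by (apply disk_ne; auto).
    assert (HD3 : CD (blaschke_formula g1 (repeat c 1)) z0
       (g1 * ((1 - Cconj c * c) / ((1 - Cconj c * z0) * (1 - Cconj c * z0))))%C).
    { eapply CD_eq; [apply (CD_mult (fun _ => g1) (fun t => blaschke_factor c t * RtoC 1)%C);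
        [apply CD_const|apply (CD_mult (blaschke_factor c) (fun _ => RtoC 1)); [apply CD_factor; auto|apply CD_const]]|].
      ring. }
    apply is_C_derive_unique in HD2. apply is_C_derive_unique in HD3.
    rewrite HD2 in HD3.
    assert (Hcc : (1 - Cconj c * c)%C <> RtoC 0) by (apply disk_ne; auto).
    apply (Cmult_neq_0 g1 ((1 - Cconj c * c) / ((1 - Cconj c * z0) * (1 - Cconj c * z0)))%C); auto.
    unfold Cdiv. apply Cmult_neq_0; auto.
    intro E. apply (f_equal (Cmult ((1 - Cconj c * z0) * (1 - Cconj c * z0))%C)) in E.
    rewrite Cinv_r in E by (apply Cmult_neq_0; auto).
    apply (f_equal fst) in E. simpl in E. lra. }
  set (q := fun j => p (sigma j)).
  assert (Hnq : prod_upto q (S M) = n) by (unfold q, n; apply prod_upto_perm; auto).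
  set (cj := fun j => if Nat.eqb j M then c else RtoC 0).
  assert (Hcj : forall j, in_disk (cj j)).
  { intros j; unfold cj; destruct (Nat.eqb j M); auto using disk0. }
  set (Bs := fun j u => if Nat.eqb j 0 then mob (- w)%C (blaschke_formula g1 (repeat (cj j) (q j)) u)
                        else blaschke_formula (RtoC 1) (repeat (cj j) (q j)) u).
  exists Bs. split.
  - intros j Hj. unfold Bs. destruct (Nat.eqb j 0) eqn:Ej.
    + destruct (mob_formula g1 (repeat (cj j) (q j)) (- w)%C Hg1 (Forall_repeat_disk _ _ (Hcj j))
         (disk_opp w Hwd)) as [g2 [b2 [H1 [H2 [H3 H4]]]]].
      exists g2, b2. split; [auto|split; [rewrite H2, repeat_length; reflexivity|split; auto]].
    + exists (RtoC 1), (repeat (cj j) (q j)).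
      split; [apply Cmod_1|split; [apply repeat_length|split; [apply Forall_repeat_disk; auto|auto]]].
  - intros z Hz. rewrite HBpsi by auto. rewrite formula_bprod, bprod_repeat.
    assert (T : forall len k, (1 <= k)%nat -> (k + len = S M)%nat -> (1 <= len)%nat ->
       fold_right (fun j acc => fun z => Bs j (acc z)) (fun z => z) (seq k len) z
       = (blaschke_factor c z ^ (fold_right (fun j acc => (q j * acc)%nat) 1%nat (seq k len)))%C).
    { induction len as [|len IH]; intros k Hk Hkl Hl; [lia|].
      destruct len as [|len].
      - cbn [seq fold_right]. unfold Bs.
        assert (Ek : Nat.eqb k 0 = false) by (apply Nat.eqb_neq; lia). rewrite Ek.
        unfold cj. assert (EkM : Nat.eqb k M = true) by (apply Nat.eqb_eq; lia). rewrite EkM.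
        rewrite formula_bprod, bprod_repeat. rewrite Nat.mul_1_r. ring.
      - change (seq k (S (S len))) with (k :: seq (S k) (S len)). cbn [fold_right].
        rewrite IH by lia. unfold Bs at 1.
        assert (Ek : Nat.eqb k 0 = false) by (apply Nat.eqb_neq; lia). rewrite Ek.
        unfold cj. assert (EkM : Nat.eqb k M = false) by (apply Nat.eqb_neq; lia). rewrite EkM.
        rewrite formula_bprod, bprod_repeat, bf0, <- Cpow_mult_r. rewrite (Nat.mul_comm (q k)). ring. }
    unfold compose_list. change (seq 0 (S M)) with (0%nat :: seq 1 M). cbn [fold_right].
    unfold prod_upto in Hnq. change (seq 0 (S M)) with (0%nat :: seq 1 M) in Hnq. cbn [fold_right] in Hnq.
    destruct M as [|M'].
    + cbn [seq fold_right] in Hnq |- *. unfold Bs. rewrite Nat.eqb_refl. unfold cj. rewrite Nat.eqb_refl.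
      rewrite formula_bprod, bprod_repeat. rewrite <- Hnq, Nat.mul_1_r. reflexivity.
    + rewrite T by lia. unfold Bs. rewrite Nat.eqb_refl. unfold cj.
      assert (E0 : Nat.eqb 0 (S M') = false) by reflexivity. rewrite E0.
      rewrite formula_bprod, bprod_repeat, bf0, <- Cpow_mult_r.
      rewrite <- Hnq, Nat.mul_comm. reflexivity.
Qed.
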